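(* For an integer $n\ge 3$ and a finite simple graph $H$ without a universal vertex, $${\rm dim}_s(K_{n,n}^{-M}\diamond H)=2n\sum_{j=1}^{k(H)}t_j(H)-n\,k(H).$$
   Context: The modular product $G\diamond H$ has vertex set $V(G)\times V(H)$; distinct vertices $(g,h)$ and $(g',h')$ are adjacent iff ($g=g'$ and $hh'\in E(H)$), or ($gg'\in E(G)$ and $h=h'$), or ($gg'\in E(G)$ and $hh'\in E(H)$), or ($g\neq g'$, $h\neq h'$, $gg'\notin E(G)$ and $hh'\notin E(H)$). $K_{n,n}^{-M}$ is the complete bipartite graph $K_{n,n}$ with a perfect matching removed. A vertex is universal if its closed neighborhood is the whole vertex set. Vertices $h,h'$ are twins if $N_H[h]=N_H[h']$. A $\gamma_H$-pair is a set $\{h,h'\}$ of two distinct vertices with $N_H[h]\cap N_H[h']=\emptyset$ and $N_H[h]\cup N_H[h']=V(H)$. Let $T_1(H),\dots,T_{k(H)}(H)$ be the partition of $V(H)$ in which each twin class of vertices not belonging to any $\gamma_H$-pair is one part, and for each $\gamma_H$-pair $\{h,h'\}$ the union of the twin classes of $h$ and of $h'$ is one part; $t_j(H)=|T_j(H)|$. ${\rm dim}_s(X)$ is the strong metric dimension: the minimum size of $S\subseteq V(X)$ such that for all distinct $x,y$ some $z\in S$ has $d_X(y,z)=d_X(y,x)+d_X(x,z)$ or $d_X(x,z)=d_X(x,y)+d_X(y,z)$. *)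

(* Defs.v *)
From mathcomp Require Import all_boot.

Set Implicit Arguments. Unset Strict Implicit. Unset Printing Implicit Defensive.

(* A finite simple graph: vertex type V : finType, adjacency e : rel V,
   assumed symmetric and irreflexive where needed. *)

Section Graphs.
Variable V : finType.
Variable e : rel V.

Definition cnbh (v : V) : {set V} := [set x | (x == v) || e v x].

Definition universal (v : V) : bool := cnbh v == [set: V].

Definition twins (h h' : V) : bool := cnbh h == cnbh h'.

Definition gpair (h h' : V) : bool :=
  [&& h != h', cnbh h :&: cnbh h' == set0 & cnbh h :|: cnbh h' == [set: V]].

Definition twin_class (h : V) : {set V} := [set x | twins x h].

Definition tpart (h : V) : {set V} :=
  if [exists h', gpair h h'] then
    twin_class h :|: \bigcup_(h' | gpair h h') twin_class h'
  else twin_class h.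

Definition tpartition : {set {set V}} := [set tpart h | h in V].

Definition kH : nat := #|tpartition|.

Fixpoint walk (k : nat) (x y : V) : bool :=
  match k with
  | 0 => x == y
  | k'.+1 => [exists z, e x z && walk k' z y]
  end.

(* graph distance: Some d if y reachable from x (shortest walk length d,
   which is always < #|V|), None otherwise *)
Definition dist (x y : V) : option nat :=
  ohead [seq k <- iota 0 #|V| | walk k x y].

Definition on_geodesic (a b c : V) : bool :=
  match dist a b, dist b c, dist a c with
  | Some p, Some q, Some r => r == p + q
  | _, _, _ => false
  end.

Definition strong_resolving (S : {set V}) : bool :=
  [forall x, forall y, (x != y) ==>
    [exists z, (z \in S) && (on_geodesic y x z || on_geodesic x y z)]].

(* strong metric dimension: minimum size of a strong resolving set
   (V itself is always one, so #|V| is a harmless default) *)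
Definition sdim : nat :=
  \big[minn/#|V|]_(S : {set V} | strong_resolving S) #|S|.

End Graphs.

Definition modprod (G H : finType) (eG : rel G) (eH : rel H) : rel (G * H) :=
  fun x y =>
    (x != y) &&
    [|| (x.1 == y.1) && eH x.2 y.2,
        eG x.1 y.1 && (x.2 == y.2),
        eG x.1 y.1 && eH x.2 y.2
      | [&& x.1 != y.1, x.2 != y.2, ~~ eG x.1 y.1 & ~~ eH x.2 y.2]].

(* K_{n,n} minus a perfect matching: vertices (side, index);
   (b,i) ~ (b',j) iff b <> b' and i <> j *)
Definition KnnM (n : nat) : rel (bool * 'I_n) :=
  fun x y => (x.1 != y.1) && (x.2 != y.2).
Arguments KnnM n : clear implicits.

(* Main.v *)
Require Import Defs.
From mathcomp Require Import all_boot.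
From mathcomp Require Import zify.
Set Implicit Arguments. Unset Strict Implicit. Unset Printing Implicit Defensive.

Lemma ohead_filter4 (p : pred nat) N :
  ohead [seq k <- iota 0 N.+4 | p k] =
  if p 0 then Some 0 else if p 1 then Some 1 else if p 2 then Some 2
  else if p 3 then Some 3 else ohead [seq k <- iota 4 N | p k].
Proof. by rewrite /=; case: (p 0); case: (p 1); case: (p 2); case: (p 3). Qed.

Section General.
Variable V : finType.
Variable e : rel V.
Hypothesis esym : symmetric e.
Hypothesis eirr : irreflexive e.

Lemma walk1 x y : walk e 1 x y = e x y.
Proof.
apply/existsP/idP => [[z /andP[exz /eqP <-]] // | exy].
by exists y; rewrite exy eqxx.
Qed.

Lemma walk2 x y : walk e 2 x y = [exists z, e x z && e z y].
Proof.
change (walk e 2 x y) with [exists z, e x z && walk e 1 z y].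
by apply: eq_existsb => z; rewrite walk1.
Qed.

Lemma walkS k x a y : e x a -> walk e k a y -> walk e k.+1 x y.
Proof. by move=> xa ay; apply/existsP; exists a; rewrite xa. Qed.

Definition D x y := if x == y then 0 else if e x y then 1
  else if [exists z, e x z && e z y] then 2 else 3.

Lemma distD (Hd : forall x y, exists2 k, k <= 3 & walk e k x y)
  (HV : 3 < #|V|) x y : dist e x y = Some (D x y).
Proof.
rewrite /dist.
have [N ->] : exists N, #|V| = N.+4.
  by exists (#|V| - 4); rewrite -addn4 subnK.
rewrite (ohead_filter4 (fun k => walk e k x y)) walk1 walk2 /D.
change (walk e 0 x y) with (x == y).
case: eqP => // nxy; case: ifP => // n1; case: ifP => // n2.
have [k k3 wk] := Hd x y.
move: k3 wk; rewrite leq_eqVlt => /orP[/eqP -> -> //|].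
rewrite ltnS leq_eqVlt => /orP[/eqP -> |].
  by rewrite walk2 n2.
rewrite ltnS leq_eqVlt => /orP[/eqP -> |].
  by rewrite walk1 n1.
by rewrite ltnS leqn0 => /eqP -> /eqP.
Qed.

Lemma inN x w : (w \in cnbh e x) = (w == x) || e x w.
Proof. by rewrite inE. Qed.

Lemma eN x w : e x w = (x != w) && (w \in cnbh e x).
Proof.
rewrite inN; case: (x =P w) => [<-|nxw]; first by rewrite eirr.
by rewrite /= (introF eqP (nesym nxw)).
Qed.

Lemma D3 x y : D x y <= 3.
Proof. by rewrite /D; repeat case: ifP. Qed.

Lemma Dxx x : D x x = 0.
Proof. by rewrite /D eqxx. Qed.

Lemma D_pos x y : x != y -> 0 < D x y.
Proof. by rewrite /D => /negbTE ->; repeat case: ifP. Qed.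

Lemma D_disj x y : (forall w, w \in cnbh e x -> w \in cnbh e y -> False) ->
  D x y = 3.
Proof.
move=> H; rewrite /D.
case: (x =P y) => [exy|_]; first by case: (H x); rewrite ?exy inN eqxx.
case: ifP => [exy|_]; first by case: (H y); rewrite inN ?exy ?orbT ?eqxx.
case: existsP => // -[w /andP[exw ewy]].
by case: (H w); rewrite inN ?exw ?orbT // (esym y) ewy orbT.
Qed.

Lemma D_adj x y : e x y -> D x y = 1.
Proof.
move=> exy; rewrite /D exy; case: (x =P y) => // exy'.
by rewrite exy' eirr in exy.
Qed.

Lemma D_two x y : x != y -> ~~ e x y ->
  (exists w, (w \in cnbh e x) && (w \in cnbh e y)) -> D x y = 2.
Proof.
move=> nxy nexy [w /andP[]]; rewrite /D (negbTE nxy) (negbTE nexy) !inN.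
case: (w =P x) => [->|nwx] /=.
  by case: (x =P y) => [exy|_] /=; [rewrite exy eqxx in nxy | rewrite (esym y) (negbTE nexy)].
move=> exw; case: (w =P y) => [wy|nwy] /=; first by rewrite -wy exw in nexy.
move=> eyw; case: existsP => // -[]; exists w; by rewrite exw (esym w) eyw.
Qed.

Lemma D_twin x y z : x != y -> cnbh e x = cnbh e y -> z != x -> D y z <= D x z.
Proof.
move=> nxy Nxy nzx.
case: (y =P z) => [<-|nyz]; first by rewrite Dxx.
have ee w : w != x -> w != y -> e x w = e y w.
  by move=> nwx nwy; rewrite !eN Nxy eq_sym nwx eq_sym nwy.
have yz : (y == z) = false by apply/eqP.
have xz : (x == z) = false by rewrite eq_sym (negbTE nzx).
have ez : e x z = e y z by rewrite (ee z) // eq_sym yz.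
rewrite /D yz xz -ez.
case exz: (e x z) => //.
have H : [exists w, e x w && e w z] -> [exists w, e y w && e w z].
  case/existsP => w /andP[exw ewz].
  have : w \in cnbh e y by rewrite -Nxy inN exw orbT.
  rewrite inN => /orP[/eqP wy|eyw]; first by rewrite wy -ez exz in ewz.
  by apply/existsP; exists w; rewrite eyw.
case: (boolP [exists w, e x w && e w z]) => [/H -> //|_]; by case: ifP.
Qed.

Lemma geo_alpha x y z : (forall w, w \in cnbh e y -> w \in cnbh e z -> False) ->
  e x z -> (exists w, (w \in cnbh e x) && (w \in cnbh e y)) ->
  D y z == D y x + D x z.
Proof.
move=> H exz [w /andP[wx wy]].
rewrite (D_disj H) (D_adj exz) (@D_two y x) //.
- apply/eqP => yx; apply: (H x); first by rewrite yx inN eqxx.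
  by rewrite inN (esym z) exz orbT.
- apply/negP => eyx; apply: (H x); first by rewrite inN eyx orbT.
  by rewrite inN (esym z) exz orbT.
- by exists w; rewrite wx wy.
Qed.

Lemma geo_beta x y z : (forall w, w \in cnbh e y -> w \in cnbh e z -> False) ->
  e y x -> (exists w, (w \in cnbh e x) && (w \in cnbh e z)) ->
  D y z == D y x + D x z.
Proof.
move=> H eyx [w /andP[wx wz]].
rewrite (D_disj H) (D_adj eyx) (@D_two x z) //.
- apply/eqP => xz; apply: (H x); first by rewrite inN eyx orbT.
  by rewrite xz inN eqxx.
- apply/negP => exz; apply: (H x); first by rewrite inN eyx orbT.
  by rewrite inN (esym z) exz orbT.
- by exists w; rewrite wx wz.
Qed.

Lemma res_twin x y z : x != y -> cnbh e x = cnbh e y -> z != x ->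
  ~~ (D y z == D y x + D x z).
Proof.
move=> nxy Nxy nzx.
have a : 0 < D y x by apply: D_pos; rewrite eq_sym.
have b := D_twin nxy Nxy nzx.
apply/negP => /eqP E; move: b; rewrite E -{2}(add0n (D x z)) leq_add2r leqn0.
by move=> /eqP h; rewrite h in a.
Qed.

Lemma res_disj x y z : (forall w, w \in cnbh e x -> w \in cnbh e y -> False) ->
  z != x -> ~~ (D y z == D y x + D x z).
Proof.
move=> H nzx; rewrite (@D_disj y x); last by move=> w a b; apply: (H w).
have a : 0 < D x z by apply: D_pos; rewrite eq_sym.
have b := D3 y z.
apply/negP => /eqP E; move: b; rewrite E -{2}(addn0 3) leq_add2l leqn0.
by move=> /eqP h; rewrite h in a.
Qed.

Lemma walk_common a b w : w \in cnbh e a -> w \in cnbh e b ->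
  exists2 k, k <= 2 & walk e k a b.
Proof.
rewrite !inN => /orP[/eqP wa|eaw] /orP[/eqP wb|ebw].
- by exists 0 => //; rewrite /= -wa wb.
- by exists 1 => //; rewrite walk1 (esym a) -wa ebw.
- by exists 1 => //; rewrite walk1 -wb.
- by exists 2 => //; rewrite walk2; apply/existsP; exists w; rewrite eaw (esym w).
Qed.

End General.

Section Prod.
Variable n : nat.
Hypothesis n3 : 3 <= n.
Variable T : finType.
Variable eH : rel T.
Hypothesis Hsym : symmetric eH.
Hypothesis Hirr : irreflexive eH.
Hypothesis Hnu : forall h : T, ~~ universal eH h.

Local Notation G := (bool * 'I_n)%type.
Local Notation eG := (KnnM n).
Local Notation P := (modprod (KnnM n) eH).
Local Notation NH := (cnbh eH).

Definition bar (g : G) : G := (~~ g.1, g.2).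

Lemma third (i j : 'I_n) : exists m : 'I_n, (m != i) && (m != j).
Proof.
apply/existsP; apply: contraT => /existsPn H.
have : [set: 'I_n] \subset [set i; j].
  by apply/subsetP => m _; rewrite !inE; move: (H m); rewrite negb_and !negbK.
move/subset_leq_card; rewrite cardsT card_ord cards2.
by case: (i != j) => /= h; have := leq_trans n3 h.
Qed.

Definition Nf (g : G) (A : {set T}) : {set G * T} :=
  [set w | if w.1 == g then w.2 \in A else eG g w.1 == (w.2 \in A)].

Lemma cnbhP x : cnbh P x = Nf x.1 (NH x.2).
Proof.
apply/setP => -[g1 k]; case: x => [g h]; rewrite !inE /modprod /= !xpair_eqE.
case: (g1 =P g) => [->|/eqP ng].
  rewrite /KnnM !eqxx /=. idtac.
  by rewrite orbF (eq_sym h k); case: (k == h).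
rewrite (eq_sym g g1) (negbTE ng) /= (eq_sym h k).
by case: (eG g g1); case: (k == h); case: (eH h k).
Qed.

Lemma Psym : symmetric P.
Proof.
move=> x y; rewrite /modprod (eq_sym x y) (eq_sym x.1 y.1) (eq_sym x.2 y.2) (Hsym x.2).
by rewrite /KnnM (eq_sym x.1.1) (eq_sym x.1.2).
Qed.

Lemma Pirr : irreflexive P.
Proof. by move=> x; rewrite /modprod eqxx. Qed.

Lemma bar_neq g : (bar g == g) = false.
Proof. by case: g => b i; rewrite /bar xpair_eqE; case: b. Qed.

Lemma neq_bar g : (g == bar g) = false.
Proof. by rewrite eq_sym bar_neq. Qed.

Lemma barK g : bar (bar g) = g.
Proof. by case: g => b i; rewrite /bar negbK. Qed.

Lemma eG_bar g : eG g (bar g) = false.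
Proof. by rewrite /KnnM /= eqxx andbF. Qed.

Lemma eG_bar' g : eG (bar g) g = false.
Proof. by rewrite /KnnM /= eqxx andbF. Qed.

Lemma eGbar g g1 : g1.2 != g.2 -> eG (bar g) g1 = ~~ eG g g1.
Proof. by rewrite /KnnM /= eq_sym => ->; case: g.1; case: g1.1. Qed.

Lemma neq2 (g g1 : G) : g1.2 != g.2 -> (g1 == g) = false.
Proof. by move=> H; apply/eqP => E; rewrite E eqxx in H. Qed.

Lemma split3 (g g1 : G) : [\/ g1 = g, g1 = bar g | g1.2 != g.2].
Proof.
case: g g1 => [b i] [b1 i1] /=; case: (i1 =P i) => [->|/eqP ne]; last by apply: Or33.
case: (b1 =P b) => [->|nb]; first by apply: Or31.
by apply: Or32; rewrite /bar /=; case: b b1 nb => -[].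
Qed.

Lemma inNf g A w : (w \in Nf g A) =
  if w.1 == g then w.2 \in A else eG g w.1 == (w.2 \in A).
Proof. by rewrite inE. Qed.

Lemma NfA g A w : w \in Nf g A -> w \in Nf (bar g) A -> False.
Proof.
rewrite !inNf; case: (split3 g w.1) => [->|->|ne].
- by rewrite eqxx neq_bar eG_bar' => ->.
- by rewrite eqxx bar_neq eG_bar; case: (w.2 \in A).
- rewrite (neq2 ne) (neq2 (g := bar g) ne) eGbar //.
  by case: (eG g w.1); case: (w.2 \in A).
Qed.

Lemma NfB g A w : w \in Nf g A -> w \in Nf g (~: A) -> False.
Proof.
by rewrite !inNf inE; case: (w.1 == g); case: (eG g w.1); case: (w.2 \in A).
Qed.

Lemma NfC g A : Nf g A = Nf (bar g) (~: A).
Proof.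
apply/setP => w; rewrite !inNf inE; case: (split3 g w.1) => [->|->|ne].
- by rewrite eqxx neq_bar eG_bar'; case: (w.2 \in A).
- by rewrite eqxx bar_neq eG_bar; case: (w.2 \in A).
- rewrite (neq2 ne) (neq2 (g := bar g) ne) eGbar //.
  by case: (eG g w.1); case: (w.2 \in A).
Qed.

Lemma NfD1 g (A B : {set T}) : A != B -> exists w, (w \in Nf g A) && (w \in Nf (bar g) B).
Proof.
move=> AB.
have [k Hk] : exists k, (k \in A) != (k \in B).
  apply/existsP; apply: contraT => /existsPn H; apply: contraNT AB => _.
  by apply/eqP/setP => k; move: (H k); rewrite negbK => /eqP.
case kA: (k \in A) Hk => /= Hk.
- exists (g, k); rewrite !inNf /= eqxx neq_bar eG_bar' kA /=.
  by move: Hk; case: (k \in B).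
- exists (bar g, k); rewrite !inNf /= eqxx bar_neq eG_bar kA /=.
  by move: Hk; case: (k \in B).
Qed.

Lemma NfD2 g (A B : {set T}) : (exists k, (k \in A) == (k \in B)) ->
  exists w, (w \in Nf g A) && (w \in Nf g B).
Proof.
move=> [k /eqP Hk]; have [m /andP[mg _]] := third g.2 g.2.
case kA: (k \in A).
- exists ((~~ g.1, m), k); rewrite !inNf /= -Hk kA.
  have -> : ((~~ g.1, m) == g) = false by apply: neq2.
  by rewrite /KnnM /= (eq_sym g.2) mg; case: g.1.
- exists (bar g, k); by rewrite !inNf /= bar_neq eG_bar -Hk kA.
Qed.

Lemma NfFar (g g' : G) (A B : {set T}) h k : g.2 != g'.2 -> h \in A -> k \notin A ->
  exists w, (w \in Nf g A) && (w \in Nf g' B).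
Proof.
move=> gg' hA kA.
have [m /andP[mg mg']] := third g.2 g'.2.
case: g g' gg' mg mg' => [b i] [b' i'] /= ii' mi mi'.
have ne1 (c : bool) : ((c, m) == (b, i)) = false by apply: neq2.
have ne2 (c : bool) : ((c, m) == (b', i')) = false by apply: neq2.
rewrite /KnnM /=.
case: (b' =P b) => [eb|/eqP nb].
- rewrite eb in ne2 *. case hB: (h \in B).
  + exists ((~~ b, m), h); rewrite !inNf /= (ne1 (~~ b)) (ne2 (~~ b)) /KnnM /= hA hB.
    by rewrite !(eq_sym _ m) mi mi'; do ?[clear ne1|clear ne2|clear eb|clear nb]; case: b.
  + exists ((~~ b, i'), h); rewrite !inNf /= hA hB.
    have -> : ((~~ b, i') == (b, i)) = false by apply: neq2; rewrite eq_sym.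
    by rewrite xpair_eqE /KnnM /= ii' eqxx; do ?[clear ne1|clear ne2|clear eb|clear nb]; case: b.
- have eb : b' = ~~ b by move: nb; case: (b); case: (b').
  rewrite eb in ne2 *. case hB: (h \in B).
  + case kB: (k \in B).
    * exists ((b, m), k); rewrite !inNf /= (ne1 b) (ne2 b) /KnnM /= (negbTE kA) kB.
      by rewrite !(eq_sym _ m) mi mi'; do ?[clear ne1|clear ne2|clear eb|clear nb]; case: b.
    * exists ((~~ b, i), k); rewrite !inNf /= (negbTE kA) kB.
      have -> : ((~~ b, i) == (b, i)) = false by rewrite xpair_eqE; do ?[clear ne1|clear ne2|clear eb|clear nb]; case: b.
      have -> : ((~~ b, i) == (~~ b, i')) = false by apply: neq2.
      by rewrite /KnnM /= eqxx; do ?[clear ne1|clear ne2|clear eb|clear nb]; case: b.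
  + exists ((~~ b, m), h); rewrite !inNf /= (ne1 (~~ b)) (ne2 (~~ b)) /KnnM /= hA hB.
    by rewrite !(eq_sym _ m) mi mi'; do ?[clear ne1|clear ne2|clear eb|clear nb]; case: b.
Qed.


Definition R (h h' : T) := (NH h' == NH h) || (NH h' == ~: NH h).

Lemma gpairE h h' : gpair eH h h' = (NH h' == ~: NH h).
Proof.
rewrite /gpair; apply/idP/eqP => [/and3P[_ /eqP I /eqP U]|E].
  apply/setP => x; rewrite in_setC.
  have := congr1 (fun S : {set T} => x \in S) I.
  have := congr1 (fun S : {set T} => x \in S) U.
  rewrite /= in_setI in_setU in_set0 in_setT.
  by case: (x \in NH h); case: (x \in NH h').
rewrite E setICr setUCr !eqxx !andbT.
have : h' \in NH h' by rewrite inE eqxx.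
rewrite E in_setC => H; apply: (contraNneq _ H) => <-; by rewrite inE eqxx.
Qed.

Lemma tpartE h : tpart eH h = [set h' | R h h'].
Proof.
rewrite /tpart; apply/setP => h'; rewrite [in RHS]inE /R.
case: existsP => [[b gb]|ng].
- rewrite in_setU [h' \in twin_class _ _]inE /twins; congr (_ || _).
  apply/bigcupP/idP => [[b0 gb0]|E].
  + by rewrite inE /twins => /eqP ->; rewrite -gpairE.
  + by exists h'; rewrite ?gpairE // inE /twins.
- rewrite inE /twins -gpairE; case: (boolP (gpair eH h h')) => [g|_].
    by exfalso; apply: ng; exists h'.
  by rewrite orbF.
Qed.

Lemma R_refl h : R h h.
Proof. by rewrite /R eqxx. Qed.

Lemma R_sym h h' : R h h' -> R h' h.
Proof. by case/orP => /eqP E; rewrite /R E ?eqxx // setCK eqxx orbT. Qed.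

Lemma R_trans a b c : R a b -> R b c -> R a c.
Proof.
case/orP => /eqP Eb /orP[/eqP Ec|/eqP Ec]; rewrite /R Ec Eb ?setCK eqxx ?orbT //.
Qed.

Lemma tpart_eq a b : R a b -> tpart eH a = tpart eH b.
Proof.
rewrite !tpartE => ab; apply/setP => y; rewrite !inE.
apply/idP/idP => H; [exact: R_trans (R_sym ab) H | exact: R_trans ab H].
Qed.

Lemma mem_tpart a b : (b \in tpart eH a) = R a b.
Proof. by rewrite tpartE inE. Qed.

Lemma tpart_R a b : tpart eH a = tpart eH b -> R a b.
Proof. by move=> E; rewrite -mem_tpart E mem_tpart R_refl. Qed.

Definition r h := odflt h [pick h' in tpart eH h].

Lemma r_R h : R h (r h).
Proof.
rewrite /r; case: pickP => [h' H|_] /=; [by rewrite -mem_tpart | exact: R_refl].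
Qed.

Lemma r_eq a b : R a b -> r a = r b.
Proof.
move=> ab; rewrite /r (tpart_eq ab); case: pickP => //= none.
by have := none b; rewrite mem_tpart R_refl.
Qed.

Lemma sum_tpart : \sum_(X in tpartition eH) #|X| = #|T|.
Proof.
have Hp : partition (tpartition eH) [set: T].
  have -> : tpartition eH = equivalence_partition R [set: T].
    rewrite /equivalence_partition.
    apply/setP => X; apply/imsetP/imsetP => -[h _ ->]; exists h => //;
      by apply/setP => y; rewrite tpartE !inE.
  apply: equivalence_partitionP => x y z _ _ _; split; first exact: R_refl.
  move=> xy; apply/idP/idP => H; [exact: R_trans (R_sym xy) H | exact: R_trans xy H].
by rewrite -(card_partition Hp) cardsT.
Qed.

Lemma nonuniv h : exists k, k \notin NH h.
Proof.
case: (boolP [exists k, k \notin NH h]) => [/existsP //|/existsPn H2].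
have := Hnu h; rewrite /universal => /negP []; apply/eqP/setP => k.
by rewrite in_setT; exact: negbNE (H2 k).
Qed.

Lemma Pdiam x y : exists2 k, k <= 3 & walk P k x y.
Proof.
case: x y => [g h] [g' h'].
have [m /andP[mg mg']] := third g.2 g'.2.
pose g1 : G := (~~ g.1, m).
have ng1 : (g1 == g) = false by apply: neq2.
have exa : P (g, h) (g1, h).
  rewrite (eN Pirr) cnbhP inNf /= ng1 xpair_eqE eq_sym ng1 /=.
  by rewrite /KnnM /= (eq_sym g.2) mg inE eqxx; case: g.1.
have [k kA] := nonuniv h.
have hA : h \in NH h by rewrite inE eqxx.
have [w /andP[w1 w2]] := NfFar (g := g1) (NH h') mg' hA kA.
have w1' : w \in cnbh P (g1, h) by rewrite cnbhP.
have w2' : w \in cnbh P (g', h') by rewrite cnbhP.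
have [k' k'2 wk] := walk_common Psym w1' w2'.
by exists k'.+1; [exact: k'2 | exact: walkS exa wk].
Qed.

Lemma card_V : #|{: G * T}| = 2 * n * #|T|.
Proof. by rewrite card_prod card_prod card_bool card_ord. Qed.

Lemma HV (x : G * T) : 3 < #|{: G * T}|.
Proof.
rewrite card_V; have : 0 < #|T| by apply/card_gt0P; exists x.2.
move: n3 => *; nia.
Qed.

Definition barv (x : G * T) : G * T := (bar x.1, x.2).

Lemma eG_sym : symmetric eG.
Proof. by move=> a b; rewrite /KnnM eq_sym (eq_sym a.2). Qed.

Lemma KEY x y : ~~ ((x.1.2 == y.1.2) && R x.2 y.2) ->
  D P y (barv y) == D P y x + D P x (barv y).
Proof.
case: x y => [g h] [g' h'] /=.
have Hdisj : forall w, w \in cnbh P (g', h') -> w \in cnbh P (bar g', h') -> False.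
  by move=> w; rewrite !cnbhP /=; apply: NfA.
have hA : h \in NH h by rewrite inE eqxx.
have [k kA] := nonuniv h.
have symm : (h' \in NH h) = (h \in NH h') by rewrite !inE (eq_sym h') Hsym.
case: (g.2 =P g'.2) => [e2|/eqP n2] /= ND.
- have {}ND : ~~ R h h' by [].
  move: (ND); rewrite /R negb_or => /andP[nBA nBC].
  have nAB : NH h != NH h' by rewrite eq_sym.
  have nhh : h != h' by apply: contraNneq ND => <-; exact: R_refl.
  have Hc : exists k, (k \in NH h) == (k \in NH h').
    apply/existsP; apply: contraNT nBC => /existsPn H.
    apply/eqP/setP => z; rewrite in_setC; move: (H z).
    by case: (z \in NH h); case: (z \in NH h').
  case: (split3 g g') => [eg|eg|]; last by rewrite e2 eqxx.
  + rewrite eg in Hdisj *; case hA': (h' \in NH h).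
    * apply: (geo_beta Psym Pirr Hdisj).
        rewrite (eN Pirr) cnbhP inNf /= eqxx -symm hA' andbT xpair_eqE eqxx /=.
        by rewrite eq_sym.
      have [w /andP[w1 w2]] := NfD1 g nAB.
      by exists w; rewrite !cnbhP /= w1 w2.
    * apply: (geo_alpha Psym Pirr Hdisj).
        rewrite (eN Pirr) cnbhP inNf /= bar_neq eG_bar hA' xpair_eqE neq_bar /=.
        by [].
      have [w /andP[w1 w2]] := NfD2 g Hc.
      by exists w; rewrite !cnbhP /= w1 w2.
  + rewrite eg /barv /= barK; case hA': (h' \in NH h).
    * apply: (geo_alpha Psym Pirr).
      - by move=> w; rewrite !cnbhP /= => w1 w2; apply: (NfA w2 w1).
      - by rewrite (eN Pirr) cnbhP inNf /= eqxx hA' xpair_eqE eqxx /= andbT.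
      - have [w /andP[w1 w2]] := NfD1 g nAB.
        by exists w; rewrite !cnbhP /= w1 w2.
    * apply: (geo_beta Psym Pirr).
      - by move=> w; rewrite !cnbhP /= => w1 w2; apply: (NfA w2 w1).
      - rewrite (eN Pirr) cnbhP inNf /= neq_bar eG_bar' -symm hA'.
        by rewrite xpair_eqE bar_neq.
      - have [w /andP[w1 w2]] := NfD2 g Hc.
        by exists w; rewrite !cnbhP /= w1 w2.
- have ngg : (g == g') = false by apply: neq2.
  have ngb : (bar g' == g) = false by apply: neq2; rewrite eq_sym.
  have eGb : eG g (bar g') = ~~ eG g' g by rewrite eG_sym eGbar // eq_sym.
  case E: (eG g' g == (h \in NH h')).
  + apply: (geo_beta Psym Pirr Hdisj).
      by rewrite (eN Pirr) cnbhP inNf /= ngg E xpair_eqE eq_sym ngg.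
    have [w /andP[w1 w2]] := NfFar (g := g) (g' := bar g') (NH h') n2 hA kA.
    by exists w; rewrite !cnbhP /= w1 w2.
  + apply: (geo_alpha Psym Pirr Hdisj).
      rewrite (eN Pirr) cnbhP inNf /= ngb eGb symm xpair_eqE eq_sym ngb /=.
      by move: E; case: (eG g' g); case: (h \in NH h').
    have [w /andP[w1 w2]] := NfFar (g := g) (g' := g') (NH h') n2 hA kA.
    by exists w; rewrite !cnbhP /= w1 w2.
Qed.


Lemma sameblock x y : x.1.2 = y.1.2 -> R x.2 y.2 ->
  (cnbh P x = cnbh P y) \/
  (forall w, w \in cnbh P x -> w \in cnbh P y -> False).
Proof.
case: x y => [g h] [g' h'] /= e2; rewrite /R => /orP[/eqP E|/eqP E];
  rewrite !cnbhP /= E; (case: (split3 g g') => [->|->|]; last by rewrite e2 eqxx).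
- by left.
- by right => w; apply: NfA.
- by right => w; apply: NfB.
- by left; rewrite -NfC.
Qed.

Lemma lower S : strong_resolving P S -> #|~: S| <= n * #|tpartition eH|.
Proof.
move=> HS.
pose beta (x : G * T) := (x.1.2, tpart eH x.2).
have inj : {in ~: S &, injective beta}.
  move=> x y xS yS [e2 et]; apply/eqP; apply: contraT => nxy.
  have HV' := HV x.
  move/forallP: HS => /(_ x) /forallP /(_ y); rewrite nxy /=.
  case/existsP => z /andP[zS og].
  have zx : z != x by apply: contraTneq zS => ->; rewrite -in_setC.
  have zy : z != y by apply: contraTneq zS => ->; rewrite -in_setC.
  move: og; rewrite /on_geodesic !(distD Pdiam HV').
  have R12 : R x.2 y.2 by apply: tpart_R.
  case: (sameblock e2 R12) => [Nxy|Hd].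
  - have nyx : y != x by rewrite eq_sym.
    by rewrite (negbTE (res_twin Pirr nxy Nxy zx))
               (negbTE (res_twin Pirr nyx (esym Nxy) zy)).
  - rewrite (negbTE (res_disj Psym Hd zx)).
    by rewrite (negbTE (res_disj Psym (fun w a b => Hd w b a) zy)).
rewrite -(card_in_imset inj).
apply: (@leq_trans #|setX [set: 'I_n] (tpartition eH)|).
  apply: subset_leq_card; apply/subsetP => _ /imsetP[x _ ->].
  by rewrite in_setX in_setT /=; apply: imset_f.
by rewrite cardsX cardsT card_ord.
Qed.

Definition I0 : {set G * T} := [set x | (x.1.1 == false) && (x.2 == r x.2)].

Lemma I0_inj x y : x \in I0 -> y \in I0 -> x.1.2 = y.1.2 -> R x.2 y.2 -> x = y.
Proof.
case: x y => [[b i] h] [[b' i'] h']; rewrite !inE /= => /andP[/eqP -> /eqP hr].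
by move=> /andP[/eqP -> /eqP hr'] -> /r_eq E; rewrite hr hr' E.
Qed.

Lemma card_I0 : #|I0| = n * #|tpartition eH|.
Proof.
pose beta (x : G * T) := (x.1.2, tpart eH x.2).
have inj : {in I0 &, injective beta}.
  by move=> x y xI yI [e2 et]; apply: I0_inj => //; apply: tpart_R.
rewrite -(card_in_imset inj).
have -> : beta @: I0 = setX [set: 'I_n] (tpartition eH).
  apply/eqP; rewrite eqEsubset; apply/andP; split.
    apply/subsetP => _ /imsetP[x _ ->].
    by rewrite in_setX in_setT /=; apply: imset_f.
  apply/subsetP => -[i X]; rewrite in_setX /= => /andP[_ /imsetP[h _ ->]].
  apply/imsetP; exists ((false, i), r h).
    by rewrite inE /= (r_eq (R_sym (r_R h))) eqxx.
  by rewrite /beta /= (tpart_eq (r_R h)).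
by rewrite cardsX cardsT card_ord.
Qed.

Lemma res_I0 : strong_resolving P (~: I0).
Proof.
apply/forallP => x; apply/forallP => y; apply/implyP => nxy.
have HV' := HV x.
case xI: (x \in I0); last first.
  apply/existsP; exists x; rewrite in_setC xI /= /on_geodesic !(distD Pdiam HV').
  by rewrite Dxx addn0 eqxx.
case yI: (y \in I0); last first.
  apply/existsP; exists y; rewrite in_setC yI /= /on_geodesic !(distD Pdiam HV').
  by rewrite Dxx addn0 eqxx orbT.
apply/existsP; exists (barv y); apply/andP; split.
  move: yI; rewrite in_setC !inE /= => /andP[/eqP -> _] //.
rewrite /on_geodesic !(distD Pdiam HV') KEY //.
apply/negP => /andP[/eqP e2 Rxy].
by move: nxy; rewrite (I0_inj xI yI e2 Rxy) eqxx.
Qed.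

End Prod.

Lemma bigmin_eq (V : finType) (F : {set V} -> nat) (Pp : pred {set V}) m d S0 :
  Pp S0 -> F S0 = m -> (forall S, Pp S -> m <= F S) -> m <= d ->
  \big[minn/d]_(S | Pp S) F S = m.
Proof.
move=> PS0 FS0 HF md; apply/eqP; rewrite eqn_leq; apply/andP; split.
  rewrite -FS0; have : S0 \in index_enum {set V} by rewrite mem_index_enum.
  elim: (index_enum _) => // a rr IH; rewrite inE big_cons => /orP[/eqP <-|Hr].
    by rewrite PS0 geq_minl.
  by case: ifP => _; [rewrite geq_min IH ?orbT | exact: IH].
apply: (big_ind (fun v => m <= v)) => //; first by move=> a b ha hb; rewrite leq_min ha hb.
Qed.

Theorem mainTheorem12 (n : nat) (T : finType) (eH : rel T) :
  3 <= n -> symmetric eH -> irreflexive eH ->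
  (forall h : T, ~~ universal eH h) ->
  sdim (modprod (KnnM n) eH) =
    2 * n * (\sum_(X in tpartition eH) #|X|) - n * kH eH.
Proof.
move=> n3 Hsym Hirr Hnu.
rewrite sum_tpart /kH /sdim.
have CV := card_V n T.
apply: (@bigmin_eq _ (fun S => #|S|) (strong_resolving (modprod (KnnM n) eH))
          _ _ (~: I0 n eH)).
- exact: res_I0.
- have := cardsC (I0 n eH); rewrite card_I0 => E.
  by rewrite -CV -E addKn.
- move=> S HS; have := cardsC S; have := lower n3 Hsym Hnu HS.
  move=> L C; by rewrite -CV -C leq_subLR [n * _ + _]addnC leq_add2l.
- by rewrite -CV leq_subr.
Qed.
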